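(* Let $\{\alpha_k\}$ be the stepsize sequence generated by Algorithm 1 or Algorithm 2 (described in the context) under the Standing Assumption and Matrix Assumption of the context, and suppose the algorithm does not terminate finitely. Then there exists $\alpha_{\min}>0$ such that $\alpha_k\ge\alpha_{\min}$ for all $k\in\mathbb{N}$.
   Context: Notation: $g_k=\nabla f(x_k)$, $c_k=c(x_k)$, $J_k=\nabla c(x_k)^T$; $\phi(x,\tau)=\tau f(x)+\|c(x)\|_1$; $\Delta q(x,\tau,g,H,d)=-\tau(g^Td+\frac12\max\{d^THd,0\})+\|c(x)\|_1$. Matrix Assumption: symmetric $H_k$ with $\|H_k\|_2\le\kappa_H$ and $u^TH_ku\ge\zeta\|u\|_2^2$ whenever $J_ku=0$. Common iteration: $(d_k,y_k)$ solves $H_kd_k+J_k^Ty_k=-g_k$, $J_kd_k=-c_k$; stop if $g_k+J_k^Ty_k=0$ and $c_k=0$. $\tau_k^{trial}=\infty$ if $g_k^Td_k+\max\{d_k^TH_kd_k,0\}\le0$, else $\frac{(1-\sigma)\|c_k\|_1}{g_k^Td_k+\max\{d_k^TH_kd_k,0\}}$; $\tau_k=\tau_{k-1}$ if $\tau_{k-1}\le\tau_k^{trial}$, else $(1-\epsilon)\tau_k^{trial}$ (with $\tau_{-1}>0$, $\epsilon,\sigma\in(0,1)$); $x_{k+1}=x_k+\alpha_kd_k$. (SD) for trial $\alpha$: $\phi(x_k+\alpha d_k,\tau_k)\le\phi(x_k,\tau_k)-\eta\alpha\Delta q(x_k,\tau_k,g_k,H_k,d_k)$, $\eta\in(0,1)$.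 Algorithm 1 (inputs also $\rho>1$, $L_{-1}>0$, $\gamma_{-1,i}>0$): choose $L_{k,0}\in(0,L_{k-1}]$, $\gamma_{k,i,0}\in(0,\gamma_{k-1,i}]$; for $j=0,1,\dots$ with $\Lambda_{k,j}=\tau_kL_{k,j}+\sum_i\gamma_{k,i,j}$: $\widehat\alpha_{k,j}=\frac{2(1-\eta)\Delta q(x_k,\tau_k,g_k,H_k,d_k)}{\Lambda_{k,j}\|d_k\|_2^2}$, $\widetilde\alpha_{k,j}=\widehat\alpha_{k,j}-\frac{4\|c_k\|_1}{\Lambda_{k,j}\|d_k\|_2^2}$; $\alpha_{k,j}=\widehat\alpha_{k,j}$ if $\widehat\alpha_{k,j}<1$, $1$ if $\widetilde\alpha_{k,j}\le1\le\widehat\alpha_{k,j}$, $\widetilde\alpha_{k,j}$ if $\widetilde\alpha_{k,j}>1$; accept ($\alpha_k=\alpha_{k,j}$, $L_k=L_{k,j}$, $\gamma_{k,i}=\gamma_{k,i,j}$) if (SD) holds or if both $f(x_k+\alpha_{k,j}d_k)\le f(x_k)+\alpha_{k,j}g_k^Td_k+\frac12L_{k,j}\alpha_{k,j}^2\|d_k\|_2^2$ (LF) and $|c_i(x_k+\alpha_{k,j}d_k)|\le|c_i(x_k)+\alpha_{k,j}\nabla c_i(x_k)^Td_k|+\frac12\gamma_{k,i,j}\alpha_{k,j}^2\|d_k\|_2^2$ (LC$_i$) for all $i$; otherwise multiply $L_{k,j}$ by $\rho$ if (LF) fails and $\gamma_{k,i,j}$ by $\rho$ if (LC$_i$) fails.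 Algorithm 2 (inputs also $\nu\in(0,1)$, $\alpha>0$): $\alpha_k=\nu^j\alpha$ for the smallest $j\ge0$ such that (SD) holds. Standing Assumption: an open convex set $\mathcal X$ contains all iterates and trial points $x_k+\alpha_{k,j}d_k$; $f$ is $C^1$, bounded below on $\mathcal X$, $\nabla f$ bounded and $L$-Lipschitz on $\mathcal X$; $c$, $\nabla c^T$ bounded on $\mathcal X$; $\nabla c_i$ is $\gamma_i$-Lipschitz on $\mathcal X$; singular values of $\nabla c(x)^T$ bounded away from zero uniformly over $\mathcal X$. *)

(* Defs.v *)
From mathcomp Require Import all_boot all_order all_algebra.
From mathcomp Require Import all_classical all_reals all_analysis.
Import Order.TTheory GRing.Theory Num.Theory.
Import numFieldNormedType.Exports.
Local Open Scope ring_scope.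
Local Open Scope classical_set_scope.

Set Implicit Arguments.
Unset Strict Implicit.
Unset Printing Implicit Defensive.

Definition dotp (R : realType) (n : nat) (u v : 'cV[R]_n) : R :=
  \sum_(i < n) u i 0 * v i 0.

Definition norm2 (R : realType) (n : nat) (u : 'cV[R]_n) : R :=
  Num.sqrt (dotp u u).

Definition norm1 (R : realType) (n : nat) (u : 'cV[R]_n) : R :=
  \sum_(i < n) `|u i 0|.

Definition quadf (R : realType) (n : nat) (H : 'M[R]_n) (u : 'cV[R]_n) : R :=
  dotp u (H *m u).

Definition opnorm_le (R : realType) (m n : nat) (A : 'M[R]_(m, n)) (kappa : R) :=
  forall u : 'cV[R]_n, norm2 (A *m u) <= kappa * norm2 u.

Definition convex_set (R : realType) (n : nat) (X : set 'cV[R]_n) :=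
  forall x y, X x -> X y -> forall t : R, 0 <= t <= 1 -> X ((1 - t) *: x + t *: y).

Definition phi (R : realType) (n m : nat) (f : 'cV[R]_n -> R)
  (c : 'cV[R]_n -> 'cV[R]_m) (x : 'cV[R]_n) (tau : R) : R :=
  tau * f x + norm1 (c x).

Definition Dq (R : realType) (n m : nat) (c : 'cV[R]_n -> 'cV[R]_m)
  (x : 'cV[R]_n) (tau : R) (g : 'cV[R]_n) (H : 'M[R]_n) (d : 'cV[R]_n) : R :=
  - tau * (dotp g d + 2^-1 * Num.max (quadf H d) 0) + norm1 (c x).

(* merit parameter update: tau_k from tau_{k-1}.  tau_trial = +oo when
   g^T d + max{d^T H d,0} <= 0, in which case tau_{k-1} <= tau_trial. *)
Definition tau_update (R : realType) (n m : nat) (sigma eps : R) (tau_prev : R)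
  (g : 'cV[R]_n) (H : 'M[R]_n) (d : 'cV[R]_n) (cx : 'cV[R]_m) : R :=
  let den := dotp g d + Num.max (quadf H d) 0 in
  if den <= 0 then tau_prev
  else let trial := (1 - sigma) * norm1 cx / den in
       if tau_prev <= trial then tau_prev else (1 - eps) * trial.

Definition SD (R : realType) (n m : nat) (f : 'cV[R]_n -> R)
  (c : 'cV[R]_n -> 'cV[R]_m) (eta : R) (x : 'cV[R]_n) (tau : R)
  (g : 'cV[R]_n) (H : 'M[R]_n) (d : 'cV[R]_n) (alpha : R) : Prop :=
  phi f c (x + alpha *: d) tau <= phi f c x tau - eta * alpha * Dq c x tau g H d.

(* The common iteration (Section "Common iteration"), for given sequences.
   tau_m1 is tau_{-1}.  gradf is the gradient of f, J x = nabla c(x)^T. *)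
Definition common_iteration (R : realType) (n m : nat) (f : 'cV[R]_n -> R)
  (gradf : 'cV[R]_n -> 'cV[R]_n) (c : 'cV[R]_n -> 'cV[R]_m)
  (J : 'cV[R]_n -> 'M[R]_(m, n)) (sigma eps tau_m1 : R)
  (x d : nat -> 'cV[R]_n) (y : nat -> 'cV[R]_m) (H : nat -> 'M[R]_n)
  (tau alpha : nat -> R) : Prop :=
  forall k : nat,
    [/\ H k *m d k + (J (x k))^T *m y k = - gradf (x k),
        J (x k) *m d k = - c (x k),
        tau k = tau_update sigma eps (if k is k'.+1 then tau k' else tau_m1)
                  (gradf (x k)) (H k) (d k) (c (x k))
      & x k.+1 = x k + alpha k *: d k].

Definition never_stops (R : realType) (n m : nat)
  (gradf : 'cV[R]_n -> 'cV[R]_n) (c : 'cV[R]_n -> 'cV[R]_m)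
  (J : 'cV[R]_n -> 'M[R]_(m, n)) (x : nat -> 'cV[R]_n) (y : nat -> 'cV[R]_m) :=
  forall k, ~ (gradf (x k) + (J (x k))^T *m y k = 0 /\ c (x k) = 0).

Definition matrix_assumption (R : realType) (n m : nat)
  (J : 'cV[R]_n -> 'M[R]_(m, n)) (x : nat -> 'cV[R]_n) (H : nat -> 'M[R]_n)
  (kappaH zeta : R) : Prop :=
  forall k, [/\ (H k)^T = H k, opnorm_le (H k) kappaH
   & forall u : 'cV[R]_n, J (x k) *m u = 0 -> zeta * norm2 u ^+ 2 <= quadf (H k) u].

Definition alpha_A1 (R : realType) (n m : nat) (c : 'cV[R]_n -> 'cV[R]_m)
  (eta : R) (x : 'cV[R]_n) (tau : R) (g : 'cV[R]_n) (H : 'M[R]_n)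
  (d : 'cV[R]_n) (Lambda : R) : R :=
  let ahat := 2 * (1 - eta) * Dq c x tau g H d / (Lambda * norm2 d ^+ 2) in
  let atil := ahat - 4 * norm1 (c x) / (Lambda * norm2 d ^+ 2) in
  if ahat < 1 then ahat else if atil <= 1 then 1 else atil.

Definition LF (R : realType) (n : nat) (f : 'cV[R]_n -> R) (x : 'cV[R]_n)
  (g : 'cV[R]_n) (d : 'cV[R]_n) (L a : R) : Prop :=
  f (x + a *: d) <= f x + a * dotp g d + 2^-1 * L * a ^+ 2 * norm2 d ^+ 2.

(* condition (LC_i);  nabla c_i(x)^T d = (J x *m d)_i *)
Definition LC (R : realType) (n m : nat) (c : 'cV[R]_n -> 'cV[R]_m)
  (J : 'cV[R]_n -> 'M[R]_(m, n)) (x : 'cV[R]_n) (d : 'cV[R]_n) (i : 'I_m)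
  (gam a : R) : Prop :=
  `|c (x + a *: d) i 0| <= `|c x i 0 + a * (J x *m d) i 0|
                           + 2^-1 * gam * a ^+ 2 * norm2 d ^+ 2.

(* Lk k j = L_{k,j}, gk k j i = gamma_{k,i,j}, and the
   inner loop at iteration k accepts at index jk k; then L_k = Lk k (jk k),
   gamma_{k,i} = gk k (jk k) i.  Lm1 = L_{-1}, gm1 i = gamma_{-1,i}. *)
Definition algorithm1 (R : realType) (n m : nat) (f : 'cV[R]_n -> R)
  (gradf : 'cV[R]_n -> 'cV[R]_n) (c : 'cV[R]_n -> 'cV[R]_m)
  (J : 'cV[R]_n -> 'M[R]_(m, n)) (X : set 'cV[R]_n) (eta rho Lm1 : R)
  (gm1 : 'I_m -> R) (x d : nat -> 'cV[R]_n) (H : nat -> 'M[R]_n)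
  (tau alpha : nat -> R) : Prop :=
  exists (Lk : nat -> nat -> R) (gk : nat -> nat -> 'I_m -> R) (jk : nat -> nat),
  forall k : nat,
    let Lprev := if k is k'.+1 then Lk k' (jk k') else Lm1 in
    let gprev i := if k is k'.+1 then gk k' (jk k') i else gm1 i in
    let a j := alpha_A1 c eta (x k) (tau k) (gradf (x k)) (H k) (d k)
                 (tau k * Lk k j + \sum_(i < m) gk k j i) in
    let accept j := SD f c eta (x k) (tau k) (gradf (x k)) (H k) (d k) (a j)
                    \/ (LF f (x k) (gradf (x k)) (d k) (Lk k j) (a j)
                        /\ forall i, LC c J (x k) (d k) i (gk k j i) (a j)) in
    (0 < Lk k 0 <= Lprev) /\
    (forall i, 0 < gk k 0 i <= gprev i) /\
    (forall j, (j <= jk k)%N -> X (x k + a j *: d k)) /\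
        (forall j, (j < jk k)%N ->
           [/\ ~ accept j,
               (LF f (x k) (gradf (x k)) (d k) (Lk k j) (a j) -> Lk k j.+1 = Lk k j),
               (~ LF f (x k) (gradf (x k)) (d k) (Lk k j) (a j) ->
                  Lk k j.+1 = rho * Lk k j),
               (forall i, LC c J (x k) (d k) i (gk k j i) (a j) -> gk k j.+1 i = gk k j i)
             & (forall i, ~ LC c J (x k) (d k) i (gk k j i) (a j) ->
                  gk k j.+1 i = rho * gk k j i)]) /\
    accept (jk k) /\ alpha k = a (jk k).

Definition algorithm2 (R : realType) (n m : nat) (f : 'cV[R]_n -> R)
  (gradf : 'cV[R]_n -> 'cV[R]_n) (c : 'cV[R]_n -> 'cV[R]_m)
  (X : set 'cV[R]_n) (eta nu abar : R)
  (x d : nat -> 'cV[R]_n) (H : nat -> 'M[R]_n) (tau alpha : nat -> R) : Prop :=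
  forall k : nat, exists j : nat,
    [/\ alpha k = nu ^+ j * abar,
        SD f c eta (x k) (tau k) (gradf (x k)) (H k) (d k) (nu ^+ j * abar),
        (forall i, (i < j)%N ->
           ~ SD f c eta (x k) (tau k) (gradf (x k)) (H k) (d k) (nu ^+ i * abar))
      & (forall i, (i <= j)%N -> X (x k + (nu ^+ i * abar) *: d k))].

Definition standing_assumption (R : realType) (n m : nat) (f : 'cV[R]_n -> R)
  (gradf : 'cV[R]_n -> 'cV[R]_n) (c : 'cV[R]_n -> 'cV[R]_m)
  (J : 'cV[R]_n -> 'M[R]_(m, n)) (X : set 'cV[R]_n) (x : nat -> 'cV[R]_n) : Prop :=
  open X /\ convex_set X /\ (forall k, X (x k)) /\
      (* f is C^1 on X with gradient gradf (continuity of gradf: Lipschitz below) *)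
      (forall z, X z -> differentiable f z /\ forall v, 'd f z v = dotp (gradf z) v) /\
      (forall z, X z -> differentiable c z /\ forall v, 'd c z v = J z *m v) /\
      (exists flow : R, forall z, X z -> flow <= f z) /\
      (exists Bg : R, forall z, X z -> norm2 (gradf z) <= Bg) /\
      (exists L : R, forall z w, X z -> X w ->
          norm2 (gradf z - gradf w) <= L * norm2 (z - w)) /\
      (exists Bc : R, forall z, X z -> norm2 (c z) <= Bc) /\
      (exists BJ : R, forall z, X z -> opnorm_le (J z) BJ) /\
      (* nabla c_i is gamma_i-Lipschitz on X; nabla c_i(z) = (row i (J z))^T *)
      (exists gam : 'I_m -> R, forall i z w, X z -> X w ->
          norm2 ((row i (J z))^T - (row i (J w))^T) <= gam i * norm2 (z - w)) /\
      (* singular values of nabla c(z) = (J z)^T bounded away from zero: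
         smallest singular value sigma_min((J z)^T) = min_{||v||=1} ||(J z)^T v|| *)
      (exists s : R, 0 < s /\ forall z, X z -> forall v : 'cV[R]_m,
          s * norm2 v <= norm2 ((J z)^T *m v)).

(* Main.v *)
Set Warnings "-notation-overridden -ambiguous-paths -notation-incompatible-prefix".
From HB Require Import structures.
Require Import Defs.
From mathcomp Require Import all_boot all_order all_algebra.
From mathcomp Require Import all_classical all_reals all_analysis.
From mathcomp Require Import ring lra.
Import Order.TTheory GRing.Theory Num.Theory.
Import numFieldNormedType.Exports.
Local Open Scope ring_scope.
Local Open Scope classical_set_scope.
Set Implicit Arguments.
Unset Strict Implicit.
Unset Printing Implicit Defensive.

Lemma dotpE (R : realType) (n : nat) (u v : 'cV[R]_n) : dotp u v = (u^T *m v) 0 0.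
Proof. by rewrite /dotp mxE; apply: eq_bigr => i _; rewrite mxE. Qed.

Lemma dotpC (R : realType) (n : nat) (u v : 'cV[R]_n) : dotp u v = dotp v u.
Proof. by rewrite /dotp; apply: eq_bigr => i _; rewrite mulrC. Qed.

Lemma dotpDl (R : realType) (n : nat) (u v w : 'cV[R]_n) :
  dotp (u + v) w = dotp u w + dotp v w.
Proof. by rewrite /dotp -big_split; apply: eq_bigr => i _; rewrite !mxE mulrDl. Qed.

Lemma dotpDr (R : realType) (n : nat) (u v w : 'cV[R]_n) :
  dotp w (u + v) = dotp w u + dotp w v.
Proof. by rewrite dotpC dotpDl !(dotpC w). Qed.

Lemma dotpZl (R : realType) (n : nat) (a : R) (u w : 'cV[R]_n) :
  dotp (a *: u) w = a * dotp u w.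
Proof. by rewrite /dotp mulr_sumr; apply: eq_bigr => i _; rewrite !mxE mulrA. Qed.

Lemma dotpZr (R : realType) (n : nat) (a : R) (u w : 'cV[R]_n) :
  dotp w (a *: u) = a * dotp w u.
Proof. by rewrite dotpC dotpZl dotpC. Qed.

Lemma dotpNl (R : realType) (n : nat) (u w : 'cV[R]_n) :
  dotp (- u) w = - dotp u w.
Proof. by rewrite -scaleN1r dotpZl mulN1r. Qed.

Lemma dotpNr (R : realType) (n : nat) (u w : 'cV[R]_n) :
  dotp w (- u) = - dotp w u.
Proof. by rewrite dotpC dotpNl dotpC. Qed.

Lemma dotpBl (R : realType) (n : nat) (u v w : 'cV[R]_n) :
  dotp (u - v) w = dotp u w - dotp v w.
Proof. by rewrite dotpDl dotpNl. Qed.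

Lemma dotpBr (R : realType) (n : nat) (u v w : 'cV[R]_n) :
  dotp w (u - v) = dotp w u - dotp w v.
Proof. by rewrite dotpDr dotpNr. Qed.

Lemma dotp0l (R : realType) (n : nat) (w : 'cV[R]_n) : dotp 0 w = 0.
Proof. by rewrite /dotp big1 // => i _; rewrite mxE mul0r. Qed.

Lemma dotp0r (R : realType) (n : nat) (w : 'cV[R]_n) : dotp w 0 = 0.
Proof. by rewrite dotpC dotp0l. Qed.

Lemma dotp_ge0 (R : realType) (n : nat) (u : 'cV[R]_n) : 0 <= dotp u u.
Proof. by rewrite /dotp; apply: sumr_ge0 => i _; rewrite -expr2 sqr_ge0. Qed.

Lemma dotp_eq0 (R : realType) (n : nat) (u : 'cV[R]_n) : dotp u u = 0 -> u = 0.
Proof.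
move=> /eqP; rewrite /dotp psumr_eq0 => [/allP H|i _]; last by rewrite -expr2 sqr_ge0.
apply/matrixP => i j; rewrite (ord1 j) mxE.
have := H i (mem_index_enum _); rewrite /= -expr2 sqrf_eq0 => /eqP //.
Qed.

Lemma dotp_trmx (R : realType) (n m : nat) (A : 'M[R]_(m, n)) u w :
  dotp u (A^T *m w) = dotp (A *m u) w.
Proof. by rewrite !dotpE trmx_mul mulmxA. Qed.

Lemma norm2_ge0 (R : realType) (n : nat) (u : 'cV[R]_n) : 0 <= norm2 u.
Proof. exact: sqrtr_ge0. Qed.

Lemma norm2_sq (R : realType) (n : nat) (u : 'cV[R]_n) : norm2 u ^+ 2 = dotp u u.
Proof. by rewrite /norm2 sqr_sqrtr // dotp_ge0. Qed.

Lemma norm2_eq0 (R : realType) (n : nat) (u : 'cV[R]_n) : norm2 u = 0 -> u = 0.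
Proof. by move=> h; apply: dotp_eq0; rewrite -norm2_sq h expr0n. Qed.

Lemma norm2Z (R : realType) (n : nat) (a : R) (u : 'cV[R]_n) :
  norm2 (a *: u) = `|a| * norm2 u.
Proof.
by rewrite /norm2 dotpZl dotpZr mulrA -expr2 sqrtrM ?sqr_ge0 // sqrtr_sqr.
Qed.

Lemma norm2N (R : realType) (n : nat) (u : 'cV[R]_n) : norm2 (- u) = norm2 u.
Proof. by rewrite -scaleN1r norm2Z normrN normr1 mul1r. Qed.

Lemma norm2B (R : realType) (n : nat) (u v : 'cV[R]_n) : norm2 (u - v) = norm2 (v - u).
Proof. by rewrite -norm2N opprB. Qed.

Lemma CS (R : realType) (n : nat) (u v : 'cV[R]_n) : dotp u v <= norm2 u * norm2 v.
Proof.
have [a0|a0] := eqVneq (norm2 u) 0.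
  by rewrite a0 mul0r (norm2_eq0 a0) dotp0l.
have [b0|b0] := eqVneq (norm2 v) 0.
  by rewrite b0 mulr0 (norm2_eq0 b0) dotp0r.
have ha : 0 < norm2 u by rewrite lt_neqAle eq_sym a0 norm2_ge0.
have hb : 0 < norm2 v by rewrite lt_neqAle eq_sym b0 norm2_ge0.
have := dotp_ge0 (norm2 v *: u - norm2 u *: v).
rewrite !dotpBl !dotpBr !dotpZl !dotpZr -!norm2_sq (dotpC v u) => h.
have h2 : 0 <= 2 * (norm2 u * norm2 v) * (norm2 u * norm2 v - dotp u v) by lra.
rewrite -subr_ge0; move: h2; rewrite pmulr_rge0 // mulr_gt0 // mulr_gt0 //.
Qed.

Lemma CSabs (R : realType) (n : nat) (u v : 'cV[R]_n) : `|dotp u v| <= norm2 u * norm2 v.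
Proof.
rewrite ler_norml CS andbT lerNl -dotpNr.
by rewrite (le_trans (CS _ _)) // norm2N.
Qed.

Lemma norm2D (R : realType) (n : nat) (u v : 'cV[R]_n) : norm2 (u + v) <= norm2 u + norm2 v.
Proof.
rewrite {1}/norm2 -(ger0_norm (addr_ge0 (norm2_ge0 u) (norm2_ge0 v))) -sqrtr_sqr ler_sqrt ?sqr_ge0 //.
rewrite dotpDl !dotpDr -!norm2_sq (dotpC v u).
have := CS u v; lra.
Qed.

Lemma norm2_sqD (R : realType) (n : nat) (u v : 'cV[R]_n) :
  norm2 (u + v) ^+ 2 <= 2 * norm2 u ^+ 2 + 2 * norm2 v ^+ 2.
Proof.
rewrite !norm2_sq dotpDl !dotpDr (dotpC v u).
have := dotp_ge0 (u - v); rewrite dotpBl !dotpBr (dotpC v u); lra.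
Qed.

Lemma coord_le_norm2 (R : realType) (n : nat) (u : 'cV[R]_n) i : `|u i 0| <= norm2 u.
Proof.
rewrite -sqrtr_sqr ler_sqrt ?dotp_ge0 // /dotp (bigD1 i) //= -expr2 lerDl.
by apply: sumr_ge0 => j _; rewrite -expr2 sqr_ge0.
Qed.

Lemma norm1_ge0 (R : realType) (n : nat) (u : 'cV[R]_n) : 0 <= norm1 u.
Proof. by apply: sumr_ge0 => i _. Qed.

Lemma coord_le_norm1 (R : realType) (n : nat) (u : 'cV[R]_n) i : `|u i 0| <= norm1 u.
Proof. by rewrite /norm1 (bigD1 i) //= lerDl; apply: sumr_ge0. Qed.

Lemma dotp_le_norm1 (R : realType) (n : nat) (u v : 'cV[R]_n) :
  dotp u v <= norm1 u * norm2 v.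
Proof.
rewrite /dotp /norm1 mulr_suml; apply: ler_sum => i _.
rewrite (le_trans (ler_norm _)) // normrM ler_wpM2l //.
exact: coord_le_norm2.
Qed.

Lemma norm2_le_norm1 (R : realType) (n : nat) (u : 'cV[R]_n) : norm2 u <= norm1 u.
Proof.
rewrite -(ger0_norm (norm1_ge0 u)) -sqrtr_sqr ler_sqrt ?sqr_ge0 //.
rewrite /dotp expr2 [X in _ <= X * _]/norm1 mulr_suml; apply: ler_sum => i _.
rewrite (le_trans (ler_norm _)) // normrM ler_wpM2l ?coord_le_norm1 //.
Qed.

Lemma decomp (R : realType) (n m : nat) (Jm : 'M[R]_(m, n)) (s : R) :
  0 < s -> (forall w, s * norm2 w <= norm2 (Jm^T *m w)) ->
  forall d, exists v, Jm *m (d - v) = 0 /\ s * norm2 v <= norm2 (Jm *m d).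
Proof.
move=> s0 hs d.
pose A := Jm *m Jm^T.
have key (w : 'cV[R]_m) : dotp (Jm^T *m w) (Jm^T *m w) = dotp (A *m w) w.
  by rewrite dotp_trmx mulmxA.
have Ainj (w : 'cV[R]_m) : A *m w = 0 -> w = 0.
  move=> h; have h1 : Jm^T *m w = 0.
    have := @dotp_eq0 R n (Jm^T *m w). rewrite key h dotp0l. exact.
  have := hs w; rewrite h1.
  have -> : norm2 (0 : 'cV[R]_n) = 0 by rewrite /norm2 dotp0l sqrtr0.
  move=> h2; apply: norm2_eq0; apply/eqP; rewrite eq_le norm2_ge0 andbT.
  by rewrite -(pmulr_rle0 _ s0).
have Asym : A^T = A by rewrite /A trmx_mul trmxK.
have Au : A \in unitmx.
  rewrite -row_free_unit; apply: inj_row_free => v hv.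
  apply: trmx_inj; rewrite trmx0; apply: Ainj.
  by rewrite -Asym -trmx_mul hv trmx0.
pose w := invmx A *m (Jm *m d).
exists (Jm^T *m w); split.
  by rewrite mulmxBr mulmxA -/A mulKVmx // subrr.
have hJv : Jm *m (Jm^T *m w) = Jm *m d by rewrite mulmxA -/A mulKVmx.
have h1 : norm2 (Jm^T *m w) ^+ 2 <= norm2 (Jm *m d) * norm2 w.
  by rewrite norm2_sq dotp_trmx hJv CS.
have h2 := hs w.
have [z|nz] := eqVneq (norm2 (Jm^T *m w)) 0.
  by rewrite z mulr0 norm2_ge0.
have pz : 0 < norm2 (Jm^T *m w) by rewrite lt_neqAle eq_sym nz norm2_ge0.
rewrite -(ler_pM2r pz).
apply: (le_trans _ (_ : norm2 (Jm *m d) * (s * norm2 w) <= _)).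
  by rewrite -mulrA [X in _ <= X]mulrCA ler_pM2l // -expr2.
by rewrite ler_wpM2l ?norm2_ge0.
Qed.

Lemma dotp_opn (R : realType) (n : nat) (Hm : 'M[R]_n) kH (u v : 'cV[R]_n) :
  opnorm_le Hm kH -> `|dotp u (Hm *m v)| <= kH * norm2 u * norm2 v.
Proof.
move=> hH; rewrite (le_trans (CSabs _ _)) // mulrAC [X in _ <= X]mulrC.
by rewrite ler_wpM2l ?norm2_ge0 ?hH.
Qed.

Lemma am_gm (R : realType) (ze k a b : R) : 0 < ze ->
  2 * k * a * b <= ze / 2 * a ^+ 2 + 2 * k ^+ 2 / ze * b ^+ 2.
Proof.
move=> hz; rewrite -subr_ge0.
have -> : ze / 2 * a ^+ 2 + 2 * k ^+ 2 / ze * b ^+ 2 - 2 * k * a * b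
   = (ze * a - 2 * k * b) ^+ 2 / (2 * ze).
  by field; rewrite gt_eqF.
by rewrite divr_ge0 ?sqr_ge0 // mulr_ge0 // ltW.
Qed.

Ltac pos := repeat first [ assumption | apply: addr_ge0 | apply: mulr_ge0
   | apply: divr_ge0 | rewrite invr_ge0 | apply: sqr_ge0 | apply: exprn_ge0 | (apply: ltW; assumption) | lra ].

Lemma iter_bounds (R : realType) (n m : nat) (kH ze s Bg Bc : R) :
  0 < kH -> 0 < ze -> 0 < s -> 0 <= Bg -> 0 <= Bc ->
  exists Cd Cn : R, 0 < Cd /\ 0 <= Cn /\
  forall (g d : 'cV[R]_n) (y cv : 'cV[R]_m) (Hm : 'M[R]_n) (Jm : 'M[R]_(m, n)),
    Hm *m d + Jm^T *m y = - g -> Jm *m d = - cv ->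
    opnorm_le Hm kH -> (forall u, Jm *m u = 0 -> ze * norm2 u ^+ 2 <= quadf Hm u) ->
    (forall w, s * norm2 w <= norm2 (Jm^T *m w)) -> norm2 g <= Bg -> norm2 cv <= Bc ->
    dotp g d + Num.max (quadf Hm d) 0 <= Cd * norm1 cv /\
    norm2 d ^+ 2 <= 4 / ze * Num.max (quadf Hm d) 0 + Cn * norm1 cv.
Proof.
move=> kH0 ze0 s0 Bg0 Bc0.
pose C2 := kH + 2 * kH ^+ 2 / ze.
pose C3 := Bc / s ^+ 2.
pose Amax := (Bg + kH * (Bc / s)) / ze.
pose Ymax := (Bg + kH * (Amax + Bc / s)) / s.
have C20 : 0 <= C2 by rewrite /C2; pos.
have C30 : 0 <= C3 by rewrite /C3; pos.
have Bcs0 : 0 <= Bc / s by pos.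
have Am0 : 0 <= Amax by rewrite /Amax; pos.
have Ym0 : 0 <= Ymax by rewrite /Ymax; pos.
exists (Ymax + C2 * C3 + 1), ((4 * C2 / ze + 2) * C3); split.
  have : 0 <= Ymax + C2 * C3 by pos.
  lra.
split; first by pos.
move=> g d y cv Hm Jm eq1 eq2 hH hZ hS hg hc.
have [v [hu hv]] := decomp s0 hS d.
rewrite eq2 norm2N in hv.
have [u [{}hu dE]] : exists u, Jm *m u = 0 /\ d = u + v.
  by exists (d - v); rewrite subrK.
set a := norm2 u; set b := norm2 v; set n1 := norm1 cv; set nc := norm2 cv.
have a0 : 0 <= a := norm2_ge0 u.
have b0 : 0 <= b := norm2_ge0 v.
have n10 : 0 <= n1 := norm1_ge0 cv.
have hcn1 : nc <= n1 := norm2_le_norm1 cv.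
have nc0 : 0 <= nc := norm2_ge0 cv.
have hb : b <= Bc / s by rewrite ler_pdivlMr // mulrC (le_trans hv).
have hb2 : b ^+ 2 <= C3 * n1.
  have -> : b ^+ 2 = (s * b) ^+ 2 / s ^+ 2 by field; rewrite gt_eqF.
  rewrite /C3 [X in _ <= X]mulrAC; apply: ler_wpM2r; first by pos.
  apply: (le_trans (_ : _ <= nc ^+ 2)).
    by rewrite ler_pXn2r ?nnegrE //; pos.
  by rewrite expr2 ler_pM.
have qE : quadf Hm d = dotp u (Hm *m u) + dotp u (Hm *m v) + dotp v (Hm *m u)
                        + dotp v (Hm *m v).
  by rewrite /quadf dE mulmxDr !dotpDl !dotpDr !addrA.
have quu : ze * a ^+ 2 <= dotp u (Hm *m u) := hZ u hu.
have hopn (p q : 'cV[R]_n) : - (kH * norm2 p * norm2 q) <= dotp p (Hm *m q) /\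
    dotp p (Hm *m q) <= kH * norm2 p * norm2 q.
  by have := dotp_opn p q hH; rewrite ler_norml => /andP[].
have [q1 _] := hopn u v.
have [q2 _] := hopn v u.
have [q3 _] := hopn v v.
have amg := am_gm kH a b ze0.
have hQ : ze / 2 * a ^+ 2 - C2 * b ^+ 2 <= quadf Hm d.
  rewrite qE /C2; rewrite -/a -/b in q1 q2 q3.
  have e1 : kH * b * a = kH * a * b by ring.
  have e2 : kH * b * b = kH * b ^+ 2 by ring.
  rewrite e1 e2 in q2 q3.
  rewrite mulrDl.
  have e3 : ze * a ^+ 2 = ze / 2 * a ^+ 2 + ze / 2 * a ^+ 2 by field.
  rewrite e3 in quu.
  lra.
have hyE : Jm^T *m y = - g - Hm *m d by rewrite -eq1 addrAC subrr add0r.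
have hua : ze * a ^+ 2 <= a * (Bg + kH * (Bc / s)).
  apply: (le_trans quu).
  have -> : Hm *m u = - g - Jm^T *m y - Hm *m v.
    by rewrite -eq1 addrK dE mulmxDr addrK.
  rewrite !dotpBr dotpNr dotp_trmx hu dotp0l subr0.
  have hug : - dotp u g <= a * Bg.
    rewrite -dotpNr (le_trans (CS _ _)) // norm2N ler_wpM2l //.
  have [q4 _] := hopn u v.
  rewrite -/a -/b in q4.
  have : kH * a * b <= a * (kH * (Bc / s)).
    by rewrite mulrAC mulrC ler_wpM2l // ler_wpM2l // ltW.
  lra.
have ha : a <= Amax.
  have [az|anz] := eqVneq a 0; first by rewrite az.
  have apos : 0 < a by rewrite lt_neqAle eq_sym anz a0.
  rewrite /Amax ler_pdivlMr //.
  have e : a * (a * ze) = ze * a ^+ 2 by ring.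
  by rewrite -(ler_pM2l apos) e.
have hy : norm2 y <= Ymax.
  rewrite /Ymax ler_pdivlMr // mulrC; apply: (le_trans (hS y)); rewrite hyE.
  apply: (le_trans (norm2D _ _)); rewrite !norm2N.
  apply: lerD => //.
  apply: (le_trans (hH d)); apply: ler_wpM2l; first exact: ltW.
  by rewrite dE; apply: (le_trans (norm2D _ _)); apply: lerD.
have gdE : dotp g d = dotp cv y - quadf Hm d.
  have -> : g = - (Hm *m d + Jm^T *m y) by rewrite eq1 opprK.
  rewrite dotpNl dotpDl (dotpC (Jm^T *m y)) dotp_trmx eq2 dotpNl /quadf dotpC.
  by rewrite opprD opprK addrC.
have hcy : dotp cv y <= n1 * Ymax.
  by rewrite (le_trans (dotp_le_norm1 _ _)) // ler_wpM2l.
split.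
  rewrite gdE.
  have hC : C2 * b ^+ 2 <= C2 * C3 * n1 by rewrite -mulrA ler_wpM2l.
  have hza : 0 <= ze / 2 * a ^+ 2 by pos.
  rewrite /Num.max; case: ifP => _; nra.
have hd := norm2_sqD u v; rewrite -dE -/a -/b in hd.
have hmax : quadf Hm d <= Num.max (quadf Hm d) 0 by rewrite le_max lexx.
set M := Num.max (quadf Hm d) 0 in hmax *.
have ha2 : a ^+ 2 <= 2 / ze * (M + C2 * b ^+ 2).
  have h1 : ze / 2 * a ^+ 2 <= M + C2 * b ^+ 2 by lra.
  have -> : a ^+ 2 = 2 / ze * (ze / 2 * a ^+ 2) by field; rewrite gt_eqF.
  by apply: ler_wpM2l => //; pos.
apply: (le_trans hd).
apply: (le_trans (_ : _ <= 2 * (2 / ze * (M + C2 * b ^+ 2)) + 2 * b ^+ 2)).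
  by apply: lerD => //; apply: ler_wpM2l.
have -> : 2 * (2 / ze * (M + C2 * b ^+ 2)) + 2 * b ^+ 2
   = 4 / ze * M + (4 * C2 / ze + 2) * b ^+ 2 by ring.
  apply: lerD; first lra.
  rewrite -[X in _ <= X]mulrA; apply: ler_wpM2l => //; pos.
Qed.

Lemma affine_diff (R : realType) (n : nat) (h z : 'cV[R]_n) (t : R) :
  differentiable (fun s : R => s *: h + z) t /\ 'd (fun s : R => s *: h + z) t 1 = h.
Proof.
have -> : (fun s : R => s *: h + z) = ( *:%R^~ h) + cst z by [].
have d1 : differentiable (( *:%R^~ h) : R -> 'cV[R]_n) t.
  exact: (@ex_diff _ _ _ _ _ _ _ (is_diff_scalel t h)).
have d2 : differentiable (cst z : R -> 'cV[R]_n) t by apply: differentiable_cst.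
split; first exact: differentiableD.
rewrite diffD //.
have e : 'd ( *:%R^~ h) t = *:%R^~ h :> (R -> 'cV[R]_n).
  exact: (@diff_val _ _ _ _ _ _ _ (is_diff_scalel t h)).
rewrite [in X in X + _ = _]e.
rewrite (@diff_cst R R _ z t).
by rewrite /= scale1r addr0.
Qed.
Lemma descent (R : realType) (n : nat) (F : 'cV[R]_n -> R) (G : 'cV[R]_n -> 'cV[R]_n)
  (X : set 'cV[R]_n) (Lc : R) (z h : 'cV[R]_n) :
  0 <= Lc -> Defs.convex_set X ->
  (forall w, X w -> differentiable F w /\ forall v, 'd F w v = dotp (G w) v) ->
  (forall w w', X w -> X w' -> norm2 (G w - G w') <= Lc * norm2 (w - w')) ->
  X z -> X (z + h) ->
  `|F (z + h) - F z - dotp (G z) h| <= Lc * norm2 h ^+ 2.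
Proof.
move=> L0 cX hD hL Xz Xzh.
pose p := fun s : R => s *: h + z.
have Xp t : 0 <= t <= 1 -> X (p t).
  move=> ht; have := cX _ _ Xz Xzh t ht.
  suff -> : (1 - t) *: z + t *: (z + h) = p t by [].
  by apply/matrixP => i j; rewrite /p !mxE; ring.
pose phi := F \o p.
have dphi t : 0 <= t <= 1 ->
    derivable phi t 1 /\ 'D_1 phi t = dotp (G (p t)) h.
  move=> ht; have [dF hF] := hD _ (Xp t ht).
  have [dp hp] := affine_diff h z t.
  have dphi : differentiable phi t by apply: differentiable_comp.
  split; first exact: diff_derivable.
  by rewrite deriveE // diff_comp //= hp hF.
have cphi : {within `[0, 1], continuous phi}.
  apply: derivable_within_continuous => t; rewrite in_itv /= => ht.
  by case: (dphi t ht).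
have hder (x : R) : x \in `]0, 1[%R -> is_derive x 1 phi (dotp (G (p x)) h).
  rewrite in_itv /= => /andP[x0 x1].
  have [d1 d2] := dphi x (introT andP (conj (ltW x0) (ltW x1))).
  exact: DeriveDef.
have [c hc hmvt] := MVT_segment ler01 hder cphi.
move: hc; rewrite in_itv /= => hc.
rewrite subr0 mulr1 /phi /= /p scale1r scale0r add0r (addrC h z) in hmvt.
rewrite hmvt -dotpBl.
apply: (le_trans (CSabs _ _)).
rewrite expr2 mulrA ler_wpM2r ?norm2_ge0 //.
apply: (le_trans (hL _ _ (Xp c hc) Xz)).
rewrite addrK norm2Z ler_wpM2l // ger0_norm; last by case/andP: hc.
by rewrite ler_piMl ?norm2_ge0 //; case/andP: hc.
Qed.

Lemma coord_diff (R : realType) (m n : nat) (M : 'M[R]_(m, n)) i j :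
  'd (fun N : 'M[R]_(m, n) => N i j : R) M = (fun N : 'M[R]_(m, n) => N i j)
    :> ('M[R]_(m, n) -> R).
Proof.
have flin : linear (fun N : 'M[R]_(m, n) => N i j : R).
  by move=> a u v; rewrite !mxE.
pose fM := GRing.isLinear.Build _ _ _ _ _ flin.
pose fL : {linear 'M[R]_(m, n) -> R} := HB.pack (fun N : 'M[R]_(m, n) => N i j : R) fM.
have -> : (fun N : 'M[R]_(m, n) => N i j : R) = fL by [].
apply: diff_lin; exact: coord_continuous.
Qed.

Lemma ci_diff (R : realType) (n m : nat) (c : 'cV[R]_n -> 'cV[R]_m)
  (J : 'cV[R]_n -> 'M[R]_(m, n)) (i : 'I_m) (w : 'cV[R]_n) :
  differentiable c w -> (forall v, 'd c w v = J w *m v) ->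
  differentiable (fun z => c z i 0) w /\
  forall v, 'd (fun z => c z i 0) w v = dotp ((row i (J w))^T) v.
Proof.
move=> dc hc.
have -> : (fun z => c z i 0) = (fun N : 'cV[R]_m => N i 0) \o c by [].
split; first by apply: differentiable_comp => //; apply: differentiable_coord.
move=> v; rewrite diff_comp //; last by apply: differentiable_coord.
rewrite /= coord_diff hc mxE /dotp; apply: eq_bigr => k _; rewrite !mxE.
done.
Qed.

Ltac pos2 := repeat first [ assumption | lra | apply: addr_ge0 | apply: mulr_ge0
   | apply: divr_ge0 | rewrite invr_ge0 | apply: sqr_ge0 | apply: exprn_ge0 | (apply: ltW; assumption) | lra ].

Lemma alphaA1_ge (R : realType) (n m : nat) (c : 'cV[R]_n -> 'cV[R]_m) (eta : R)
  (x : 'cV[R]_n) (tau : R) (g : 'cV[R]_n) (H : 'M[R]_n) (d : 'cV[R]_n) (Lam b : R) :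
  b <= 1 -> b <= 2 * (1 - eta) * Dq c x tau g H d / (Lam * norm2 d ^+ 2) ->
  b <= alpha_A1 c eta x tau g H d Lam.
Proof.
move=> b1 b2; rewrite /alpha_A1.
case: ifP => // _; case: ifP => // /negbT; rewrite -ltNge => h.
by rewrite (le_trans b1) // ltW.
Qed.

Lemma tau_upd_bounds (R : realType) (n m : nat) (sigma eps tp : R) (g : 'cV[R]_n)
  (H : 'M[R]_n) (d : 'cV[R]_n) (cx : 'cV[R]_m) (Cd : R) :
  0 < sigma < 1 -> 0 < eps < 1 -> 0 < tp -> 0 < Cd ->
  dotp g d + Num.max (quadf H d) 0 <= Cd * norm1 cx ->
  let t := tau_update sigma eps tp g H d cx in
  Num.min tp ((1 - eps) * (1 - sigma) / Cd) <= t /\ t <= tp /\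
  sigma * norm1 cx + t / 2 * Num.max (quadf H d) 0
     <= - t * (dotp g d + 2^-1 * Num.max (quadf H d) 0) + norm1 cx.
Proof.
move=> /andP[s0 s1] /andP[e0 e1] tp0 Cd0 hden t.
have n10 := norm1_ge0 cx.
set M := Num.max (quadf H d) 0 in hden *.
have M0 : 0 <= M by rewrite le_max lexx orbT.
set den := dotp g d + M in hden.
rewrite /t /tau_update -/M -/den.
case: ifP => hd0.
  split; first by rewrite ge_min lexx.
  split=> //.
  have : dotp g d <= - M by rewrite /den in hd0; lra.
  move=> h; have : tp * dotp g d <= tp * (- M) by rewrite ler_wpM2l // ltW.
  have : 0 <= tp * M by pos2.
  have e : tp / 2 * M = 2^-1 * (tp * M) by rewrite mulrAC mulrC.
  rewrite e. have : sigma * norm1 cx <= norm1 cx.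
    by rewrite ler_piMl // ltW.
  nra.
move/negbT: hd0; rewrite -ltNge => dpos.
set trial := (1 - sigma) * norm1 cx / den.
have tr0 : 0 <= trial by rewrite /trial; pos2.
have trlow : (1 - sigma) / Cd <= trial.
  rewrite /trial ler_pdivlMr //.
  apply: (le_trans (ler_wpM2l _ hden)); first by pos2.
  by rewrite mulrA divfK ?gt_eqF.
have key (t' : R) : 0 <= t' -> t' <= trial ->
    sigma * norm1 cx + t' / 2 * M <= - t' * (dotp g d + 2^-1 * M) + norm1 cx.
  move=> t0 tt.
  have : t' * den <= (1 - sigma) * norm1 cx.
    by rewrite -ler_pdivlMr.
  rewrite /den => h.
  have e : t' / 2 * M = 2^-1 * (t' * M) by rewrite mulrAC mulrC.
  have e2 : - t' * (dotp g d + 2^-1 * M) = - (t' * dotp g d) - 2^-1 * (t' * M).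
    by ring.
  rewrite e e2; lra.
case: ifP => htp.
  split; first by rewrite ge_min lexx.
  by split => //; apply: key => //; apply: ltW.
move/negbT: htp; rewrite -ltNge => htp.
split.
  rewrite ge_min; apply/orP; right.
  rewrite -mulrA ler_wpM2l //; first by lra.
split; first by rewrite (le_trans _ (ltW htp)) // ler_piMl //; lra.
apply: key; first by pos2.
by rewrite ler_piMl //; lra.
Qed.

Lemma phi_descent (R : realType) (n m : nat) (f : 'cV[R]_n -> R)
  (c : 'cV[R]_n -> 'cV[R]_m) (Jx : 'M[R]_(m, n)) (Lp : R) (gp : 'I_m -> R)
  (x d g : 'cV[R]_n) (H : 'M[R]_n) (tau al : R) :
  0 <= tau -> 0 <= al <= 1 -> Jx *m d = - c x ->
  f (x + al *: d) <= f x + al * dotp g d + Lp * (al ^+ 2 * norm2 d ^+ 2) ->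
  (forall i, `|c (x + al *: d) i 0| <= `|c x i 0 + al * (Jx *m d) i 0|
                                       + gp i * (al ^+ 2 * norm2 d ^+ 2)) ->
  phi f c (x + al *: d) tau <= phi f c x tau - al * Dq c x tau g H d
      + (tau * Lp + \sum_i gp i) * (al ^+ 2 * norm2 d ^+ 2).
Proof.
move=> t0 /andP[a0 a1] hJ hF hC.
set Q := al ^+ 2 * norm2 d ^+ 2.
have hc : norm1 (c (x + al *: d)) <= (1 - al) * norm1 (c x) + (\sum_i gp i) * Q.
  rewrite /norm1 mulr_sumr mulr_suml -big_split; apply: ler_sum => i _.
  rewrite (le_trans (hC i)) // hJ mxE.
  have -> : c x i 0 + al * - c x i 0 = (1 - al) * c x i 0 by ring.
  by rewrite normrM (ger0_norm (_ : 0 <= 1 - al)) //; lra.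
rewrite /phi /Dq.
set M := Num.max (quadf H d) 0.
have M0 : 0 <= M by rewrite le_max lexx orbT.
have hf : tau * f (x + al *: d) <= tau * (f x + al * dotp g d + Lp * Q).
  by rewrite ler_wpM2l.
have : 0 <= al * tau * M by pos2.
have : 0 <= tau * Q.
  rewrite /Q; apply: mulr_ge0 => //; apply: mulr_ge0; apply: sqr_ge0.
lra.
Qed.

From Stdlib Require Import Classical.

Lemma rowdot (R : realType) (n m : nat) (A : 'M[R]_(m, n)) (i : 'I_m) (h : 'cV[R]_n) :
  dotp ((row i A)^T) h = (A *m h) i 0.
Proof. by rewrite mxE /dotp; apply: eq_bigr => k _; rewrite !mxE. Qed.

Lemma norm2Zsq (R : realType) (n : nat) (a : R) (u : 'cV[R]_n) :
  norm2 (a *: u) ^+ 2 = a ^+ 2 * norm2 u ^+ 2.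
Proof. by rewrite norm2Z exprMn real_normK // num_real. Qed.

Lemma frac_le (R : realType) (a b c e : R) : 0 < b -> 0 < e -> a * e <= c * b -> a / b <= c / e.
Proof. by move=> b0 e0 h; rewrite ler_pdivrMr // mulrAC ler_pdivlMr. Qed.

Lemma mxZcoord (R : realType) (n m : nat) (A : 'M[R]_(m, n)) (a : R) (d : 'cV[R]_n) i :
  (A *m (a *: d)) i 0 = a * (A *m d) i 0.
Proof. by rewrite -scalemxAr mxE. Qed.

Theorem lemma2p17 (R : realType) (n m : nat)
  (f : 'cV[R]_n -> R) (gradf : 'cV[R]_n -> 'cV[R]_n)
  (c : 'cV[R]_n -> 'cV[R]_m) (J : 'cV[R]_n -> 'M[R]_(m, n))
  (X : set 'cV[R]_n)
  (sigma eps eta tau_m1 rho Lm1 nu abar kappaH zeta : R) (gm1 : 'I_m -> R)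
  (x d : nat -> 'cV[R]_n) (y : nat -> 'cV[R]_m) (H : nat -> 'M[R]_n)
  (tau alpha : nat -> R) :
  0 < sigma < 1 -> 0 < eps < 1 -> 0 < eta < 1 -> 0 < tau_m1 ->
  0 < kappaH -> 0 < zeta ->
  standing_assumption f gradf c J X x ->
  matrix_assumption J x H kappaH zeta ->
  common_iteration f gradf c J sigma eps tau_m1 x d y H tau alpha ->
  never_stops gradf c J x y ->
  ((1 < rho /\ 0 < Lm1 /\ (forall i, 0 < gm1 i) /\
    algorithm1 f gradf c J X eta rho Lm1 gm1 x d H tau alpha)
   \/
   (0 < nu < 1 /\ 0 < abar /\
    algorithm2 f gradf c X eta nu abar x d H tau alpha)) ->
  exists alpha_min : R, 0 < alpha_min /\ forall k : nat, alpha_min <= alpha k.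
Proof.
move=> hsig heps heta htau0 hkH hze SA MA CI NS ALG.
have [s0' s1] := andP hsig; have [e0 e1] := andP heps; have [et0 et1] := andP heta.
case: SA => _ [cX [Xx [hfd [hcd [_ [[Bg hBg] [[Lf hLf] [[Bc hBc] [_ [[gam hgam] [s [s0 hs]]]]]]]]]]]].
pose Bg' := `|Bg|.
have hBg' z : X z -> norm2 (gradf z) <= Bg' by move=> Xz; exact: le_trans (hBg z Xz) (ler_norm Bg).
pose Bc' := `|Bc|.
have hBc' z : X z -> norm2 (c z) <= Bc' by move=> Xz; exact: le_trans (hBc z Xz) (ler_norm Bc).
pose L' := `|Lf|.
have hL' z w : X z -> X w -> norm2 (gradf z - gradf w) <= L' * norm2 (z - w).
  move=> Xz Xw; apply: le_trans (hLf z w Xz Xw) _.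
  by rewrite ler_wpM2r ?norm2_ge0 ?ler_norm.
pose gp i := `|gam i|.
have hgp i z w : X z -> X w ->
    norm2 ((row i (J z))^T - (row i (J w))^T) <= gp i * norm2 (z - w).
  move=> Xz Xw; apply: le_trans (hgam i z w Xz Xw) _.
  by rewrite ler_wpM2r ?norm2_ge0 ?ler_norm.
have L'0 : 0 <= L' by rewrite normr_ge0.
have gp0 i : 0 <= gp i by rewrite normr_ge0.
have LFf k a : X (x k + a *: d k) ->
    f (x k + a *: d k) <= f (x k) + a * dotp (gradf (x k)) (d k)
                          + L' * (a ^+ 2 * norm2 (d k) ^+ 2).
  move=> Xa.
  have := descent L'0 cX hfd hL' (Xx k) Xa.
  rewrite dotpZr norm2Zsq => /ler_normlW; lra.
have LCc k i a : X (x k + a *: d k) ->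
    `|c (x k + a *: d k) i 0| <= `|c (x k) i 0 + a * (J (x k) *m d k) i 0|
                                 + gp i * (a ^+ 2 * norm2 (d k) ^+ 2).
  move=> Xa.
  have := @descent R n (fun w => c w i 0) (fun w => (row i (J w))^T) X (gp i)
     (x k) (a *: d k) (gp0 i) cX
     (fun w Xw => ci_diff i (hcd w Xw).1 (hcd w Xw).2) (hgp i) (Xx k) Xa.
  rewrite rowdot mxZcoord norm2Zsq => h.
  set A := c (x k + a *: d k) i 0; set B := c (x k) i 0 + a * (J (x k) *m d k) i 0.
  have := ler_normD (A - B) B; rewrite subrK => h2.
  have e : A - B = A - c (x k) i 0 - a * (J (x k) *m d k) i 0 by rewrite /B opprD addrA.
  rewrite e in h2; lra.
have Bg'0 : 0 <= Bg' by rewrite normr_ge0.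
have Bc'0 : 0 <= Bc' by rewrite normr_ge0.
have [Cd [Cn [Cd0 [Cn0 IB]]]] := iter_bounds n m hkH hze s0 Bg'0 Bc'0.
have IBk k : dotp (gradf (x k)) (d k) + Num.max (quadf (H k) (d k)) 0 <= Cd * norm1 (c (x k)) /\
    norm2 (d k) ^+ 2 <= 4 / zeta * Num.max (quadf (H k) (d k)) 0 + Cn * norm1 (c (x k)).
  have [eq1 eq2 _ _] := CI k; have [_ hH hZ] := MA k.
  exact: IB eq1 eq2 hH hZ (hs _ (Xx k)) (hBg' _ (Xx k)) (hBc' _ (Xx k)).
pose tmin := Num.min tau_m1 ((1 - eps) * (1 - sigma) / Cd).
have tmin0 : 0 < tmin.
  rewrite lt_min htau0 /=; apply: divr_gt0 => //; apply: mulr_gt0; lra.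
pose prev k := if k is k'.+1 then tau k' else tau_m1.
have TB k : tmin <= tau k /\ tau k <= tau_m1.
  elim: k => [|k [IH1 IH2]].
    have [_ _ tE _] := CI 0%N.
    have [h1 [h2 _]] := tau_upd_bounds hsig heps htau0 Cd0 (IBk 0%N).1.
    by rewrite tE; split.
  have [_ _ tE _] := CI k.+1.
  have tk0 : 0 < tau k by apply: lt_le_trans IH1.
  have [h1 [h2 _]] := tau_upd_bounds hsig heps tk0 Cd0 (IBk k.+1).1.
  rewrite tE; split; last by apply: le_trans h2 IH2.
  apply: le_trans h1; rewrite le_min IH1 /=.
  by rewrite /tmin ge_min lexx orbT.
have tpos k : 0 < tau k by apply: lt_le_trans (TB k).1.
have DQ k : sigma * norm1 (c (x k)) + tau k / 2 * Num.max (quadf (H k) (d k)) 0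
              <= Dq c (x k) (tau k) (gradf (x k)) (H k) (d k).
  have [_ _ tE _] := CI k.
  have pp : 0 < prev k by case: k tE => [|k] _ //=; apply: tpos.
  have [_ [_ h3]] := tau_upd_bounds hsig heps pp Cd0 (IBk k).1.
  by rewrite /Dq tE; apply: h3.
pose K := 8 / zeta + tau_m1 * Cn / sigma.
have K0 : 0 < K.
  have : 0 < 8 / zeta by apply: divr_gt0 => //; lra.
  have : 0 <= tau_m1 * Cn / sigma.
    by apply: divr_ge0; [apply: mulr_ge0 => //; apply: ltW | apply: ltW].
  rewrite /K; lra.
have KD k : tau k * norm2 (d k) ^+ 2 <= K * Dq c (x k) (tau k) (gradf (x k)) (H k) (d k).
  apply: le_trans (_ : _ <= K * (sigma * norm1 (c (x k)) + tau k / 2 * Num.max (quadf (H k) (d k)) 0)) _; last first.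
    by rewrite ler_wpM2l ?DQ // ltW.
  set M := Num.max (quadf (H k) (d k)) 0 in DQ *.
  have M0 : 0 <= M by rewrite le_max lexx orbT.
  set n1 := norm1 (c (x k)).
  have n10 : 0 <= n1 := norm1_ge0 _.
  have tk := TB k; have tk0 := tpos k.
  apply: (le_trans (ler_wpM2l (ltW tk0) (IBk k).2)).
  rewrite -/M -/n1.
  have ee1 : tau k * (4 / zeta * M + Cn * n1) = 8 / zeta * (tau k / 2 * M) + tau k * Cn * n1.
    by rewrite /M; field; rewrite gt_eqF.
  rewrite ee1.
  have h2 : tau k * Cn * n1 <= tau_m1 * Cn / sigma * (sigma * n1).
    have -> : tau_m1 * Cn / sigma * (sigma * n1) = tau_m1 * Cn * n1 by field; rewrite gt_eqF.
    by rewrite -!mulrA ler_wpM2r ?mulr_ge0 //; case: tk.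
  have A0 : 0 <= tau k / 2 * M by apply: mulr_ge0 => //; apply: divr_ge0 => //; apply: ltW.
  have B0 : 0 <= sigma * n1 by apply: mulr_ge0 => //; apply: ltW.
  have c10 : 0 <= 8 / zeta by apply: divr_ge0 => //; apply: ltW.
  have c20 : 0 <= tau_m1 * Cn / sigma by apply: divr_ge0; [apply: mulr_ge0 => //; apply: ltW | apply: ltW].
  have : 0 <= 8 / zeta * (sigma * n1) by apply: mulr_ge0.
  have : 0 <= tau_m1 * Cn / sigma * (tau k / 2 * M) by apply: mulr_ge0.
  rewrite /K; lra.
have DQ0 k : 0 <= Dq c (x k) (tau k) (gradf (x k)) (H k) (d k).
  apply: le_trans (DQ k); apply: addr_ge0; apply: mulr_ge0; rewrite ?norm1_ge0 ?le_max ?lexx ?orbT //.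
    exact: ltW.
  by apply: divr_ge0 => //; apply: ltW.
have dpos k : 0 < norm2 (d k) ^+ 2.
  rewrite exprn_gt0 // lt_neqAle norm2_ge0 andbT eq_sym; apply/negP => /eqP h0.
  have dk0 := norm2_eq0 h0.
  have [eq1 eq2 _ _] := CI k.
  have ec : c (x k) = - (J (x k) *m d k) by rewrite eq2 opprK.
  apply: (NS k); split; last by rewrite ec dk0 mulmx0 oppr0.
  by rewrite dk0 mulmx0 add0r in eq1; rewrite eq1 subrr.
case: ALG => [[hrho [hLm1 [hgm1 [Lk [gk [jk A1]]]]]] | [hnu [habar A2]]].
  have rho0 : 0 < rho by lra.
  pose Lmax := Num.max Lm1 (rho * (2 * L')).
  pose Gmax i := Num.max (gm1 i) (rho * (2 * gp i)).
  pose Lammax := tau_m1 * Lmax + \sum_i Gmax i.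
  have inner k : Lk k 0 <= Lmax -> (forall i, gk k 0 i <= Gmax i) ->
      forall j, (j <= jk k)%N -> (0 < Lk k j <= Lmax) /\ (forall i, 0 < gk k j i <= Gmax i).
    move=> hL0 hG0.
    have [h0 [hg0 [hX [hstep _]]]] := A1 k.
    elim => [|j IHj] hj.
      split; first by rewrite (andP h0).1 hL0.
      by move=> i; rewrite (andP (hg0 i)).1 hG0.
    have hj' : (j < jk k)%N := hj.
    have [IHL IHG] := IHj (ltnW hj').
    have [nacc LFs LFf' LCs LCf'] := hstep j hj'.
    have Xa := hX j (ltnW hj').
    set a := alpha_A1 _ _ _ _ _ _ _ _ in Xa nacc LFs LFf' LCs LCf'.
    have Q0 : 0 <= a ^+ 2 * norm2 (d k) ^+ 2 by rewrite mulr_ge0 ?sqr_ge0.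
    split.
      have [hLF|hLF] := classic (LF f (x k) (gradf (x k)) (d k) (Lk k j) a).
        by rewrite (LFs hLF).
      rewrite (LFf' hLF).
      have lt2 : Lk k j < 2 * L'.
        rewrite ltNge; apply/negP => hge; apply: hLF.
        rewrite /LF; apply: le_trans (LFf k a Xa) _.
        rewrite lerD2l -mulrA -mulrA mulrA; apply: ler_wpM2r => //; lra.
      have [IHL0 _] := andP IHL.
      rewrite pmulr_rgt0 // IHL0 /=.
      by rewrite /Lmax le_max ler_pM2l // (ltW lt2) orbT.
    move=> i; have [IHG0 _] := andP (IHG i).
    have [hLC|hLC] := classic (LC c J (x k) (d k) i (gk k j i) a).
      by rewrite (LCs i hLC).
    rewrite (LCf' i hLC).
    have lt2 : gk k j i < 2 * gp i.
      rewrite ltNge; apply/negP => hge; apply: hLC.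
      rewrite /LC; apply: le_trans (LCc k i a Xa) _.
      rewrite lerD2l -mulrA -mulrA mulrA; apply: ler_wpM2r => //; lra.
    rewrite pmulr_rgt0 // IHG0 /=.
    by rewrite /Gmax le_max ler_pM2l // (ltW lt2) orbT.
  have INV k : forall j, (j <= jk k)%N ->
      (0 < Lk k j <= Lmax) /\ (forall i, 0 < gk k j i <= Gmax i).
    elim: k => [|k IHk].
      have [h0 [hg0 _]] := A1 0%N.
      apply: inner.
        by apply: le_trans (andP h0).2 _; rewrite /Lmax le_max lexx.
      by move=> i; apply: le_trans (andP (hg0 i)).2 _; rewrite /Gmax le_max lexx.
    have [h0 [hg0 _]] := A1 k.+1.
    have [IL IG] := IHk (jk k) (leqnn _).
    apply: inner.
      by apply: le_trans (andP h0).2 (andP IL).2.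
    by move=> i; apply: le_trans (andP (hg0 i)).2 (andP (IG i)).2.
  have Lmax0 : 0 < Lmax by rewrite /Lmax lt_max hLm1.
  have Gmax0 i : 0 < Gmax i by rewrite /Gmax lt_max hgm1.
  have Lammax0 : 0 < Lammax.
    have : 0 <= \sum_i Gmax i by apply: sumr_ge0 => i _; apply: ltW.
    have : 0 < tau_m1 * Lmax by apply: mulr_gt0.
    rewrite /Lammax; lra.
  pose b := 2 * (1 - eta) * tmin / (K * Lammax).
  exists (Num.min 1 b); split.
    rewrite lt_min ltr01 /=; apply: divr_gt0; last exact: mulr_gt0.
    by apply: mulr_gt0 => //; lra.
  move=> k.
  have [_ [_ [_ [_ [_ hal]]]]] := A1 k.
  rewrite hal; apply: alphaA1_ge; first by rewrite ge_min lexx.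
  apply: (le_trans (_ : _ <= b)); first by rewrite ge_min lexx orbT.
  have [IL IG] := INV k (jk k) (leqnn _).
  set Lam := tau k * Lk k (jk k) + \sum_i gk k (jk k) i.
  have Lam0 : 0 < Lam.
    have : 0 <= \sum_i gk k (jk k) i.
      by apply: sumr_ge0 => i _; apply: ltW; case/andP: (IG i).
    have : 0 < tau k * Lk k (jk k) by apply: mulr_gt0; [apply: tpos | case/andP: IL].
    rewrite /Lam; lra.
  have LamL : Lam <= Lammax.
    apply: lerD; last by apply: ler_sum => i _; case/andP: (IG i).
    by apply: ler_pM; [apply: ltW; apply: tpos | apply: ltW; case/andP: IL | case: (TB k) | case/andP: IL].
  rewrite /b; apply: frac_le; first exact: mulr_gt0.
    by apply: mulr_gt0.
  rewrite -!mulrA; apply: ler_wpM2l => //; apply: ler_wpM2l; first by lra.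
  have h1 : tmin * (Lam * norm2 (d k) ^+ 2) <= tau k * norm2 (d k) ^+ 2 * Lam.
    have -> : tau k * norm2 (d k) ^+ 2 * Lam = tau k * (Lam * norm2 (d k) ^+ 2) by ring.
    apply: ler_wpM2r; last exact: (TB k).1.
    by apply: mulr_ge0; apply: ltW => //; apply: dpos.
  apply: (le_trans h1); apply: (le_trans (ler_wpM2r (ltW Lam0) (KD k))).
  set D := Dq _ _ _ _ _ _.
  have -> : D * (K * Lammax) = K * D * Lammax by ring.
  by apply: ler_wpM2l => //; apply: mulr_ge0; [apply: ltW | apply: DQ0].
have [nu0 nu1] := andP hnu.
pose Lam2 := tau_m1 * L' + \sum_i gp i + 1.
have sgp0 : 0 <= \sum_i gp i by apply: sumr_ge0 => i _.
have Lam20 : 0 < Lam2.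
  have : 0 <= tau_m1 * L' by apply: mulr_ge0 => //; apply: ltW.
  rewrite /Lam2; lra.
pose beta := Num.min 1 ((1 - eta) * tmin / (K * Lam2)).
have beta0 : 0 < beta.
  rewrite lt_min ltr01 /=; apply: divr_gt0; last exact: mulr_gt0.
  by apply: mulr_gt0 => //; lra.
have SDs k al : 0 <= al <= beta -> X (x k + al *: d k) ->
    SD f c eta (x k) (tau k) (gradf (x k)) (H k) (d k) al.
  move=> /andP[a0 ab] Xa.
  have a1 : al <= 1 by apply: le_trans ab _; rewrite ge_min lexx.
  have ab2 : al <= (1 - eta) * tmin / (K * Lam2).
    by apply: le_trans ab _; rewrite ge_min lexx orbT.
  have [_ eq2 _ _] := CI k.
  have PD := @phi_descent R n m f c (J (x k)) L' gp (x k) (d k) (gradf (x k)) (H k)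
     (tau k) al (ltW (tpos k)) (introT andP (conj a0 a1)) eq2 (LFf k al Xa)
     (fun i => LCc k i al Xa).
  rewrite /SD.
  set D := Dq _ _ _ _ _ _ in PD *.
  set q := norm2 (d k) ^+ 2 in PD.
  apply: (le_trans PD).
  have q0 : 0 <= q by rewrite /q sqr_ge0.
  have D0 : 0 <= D := DQ0 k.
  have hq : tmin * q <= K * D.
    by apply: le_trans (KD k); rewrite ler_wpM2r // (TB k).1.
  have hal : al * (K * Lam2) <= (1 - eta) * tmin.
    by rewrite -ler_pdivlMr // mulr_gt0.
  have key : al * Lam2 * q <= (1 - eta) * D.
    rewrite -(ler_pM2l tmin0).
    have -> : tmin * (al * Lam2 * q) = (al * Lam2) * (tmin * q) by ring.
    apply: (le_trans (ler_wpM2l _ hq)); first by apply: mulr_ge0 => //; apply: ltW.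
    have -> : al * Lam2 * (K * D) = (al * (K * Lam2)) * D by ring.
    have -> : tmin * ((1 - eta) * D) = ((1 - eta) * tmin) * D by ring.
    by apply: ler_wpM2r.
  have hLam : tau k * L' + \sum_i gp i <= Lam2.
    have : tau k * L' <= tau_m1 * L' by apply: ler_wpM2r => //; case: (TB k).
    rewrite /Lam2; lra.
  have h3 : (tau k * L' + \sum_i gp i) * (al ^+ 2 * q) <= al * ((1 - eta) * D).
    apply: (le_trans (ler_wpM2r _ hLam)); first by apply: mulr_ge0 => //; apply: sqr_ge0.
    have -> : Lam2 * (al ^+ 2 * q) = al * (al * Lam2 * q) by ring.
    by apply: ler_wpM2l.
  lra.
exists (Num.min abar (nu * beta)); split.
  by rewrite lt_min habar /=; apply: mulr_gt0.
move=> k; have [j [hal hsd hnsd hX]] := A2 k.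
case: j hal hsd hnsd hX => [|j] hal _ hnsd hX.
  by rewrite hal expr0 mul1r ge_min lexx.
have nj := hnsd j (ltnSn j).
have Xj := hX j (leqnSn j).
have p0 : 0 <= nu ^+ j * abar by apply: mulr_ge0; [apply: exprn_ge0; apply: ltW | apply: ltW].
have gt : beta < nu ^+ j * abar.
  rewrite ltNge; apply/negP => hle; apply: nj; apply: SDs => //.
  by rewrite p0 hle.
rewrite hal exprS -mulrA ge_min; apply/orP; right.
by apply: ler_wpM2l; [apply: ltW | apply: ltW].
Qed.
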